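(* Let $G$ be a localic group and $X$ a set, and let $\widehat{\mu}:G\to Rel(X)$ be a morphism of localic monoids. Then there exists a unique action of $G$ on $X$, i.e. a morphism of localic groups $\widehat{\mu}:G\to Aut(X)$, whose composite with $Aut(X)\to Rel(X)$ is the given morphism; equivalently the corresponding locale map $Rel(X)\to\mathcal{O}(G)$ factors (uniquely) through $Rel(X)\to Aut(X)$ via a Hopf algebra morphism.
   Context: Localic groups/monoids are group/monoid objects in $Loc^{op}$, i.e. Hopf algebras/bialgebras in sup-lattices whose underlying algebra is a locale (comultiplication $w$, counit $e$, antipode $\iota$). For a set $X$, $Rel(X)$ is the free locale on $X\times X$ (generators $\langle x|y\rangle$), a localic monoid with $w\langle x|y\rangle=\bigvee_z\langle x|z\rangle\otimes\langle z|y\rangle$ and $e\langle x|y\rangle=\delta_{x=y}$. $Aut(X)$ is the quotient of $Rel(X)$ forcing $X\times X\to Aut(X)$ to be an $\ell$-bijection ($\bigvee_y\langle x|y\rangle=1$, $\langle x|y_1\rangle\wedge\langle x|y_2\rangle=0$ for $y_1\ne y_2$, and the two symmetric conditions); it is a localic group with the same $w,e$ and antipode $\iota\langle x|y\rangle=\langle y|x\rangle$. An action of $G$ on $X$ is a localic group morphism $G\to Aut(X)$, i.e. a Hopf algebra morphism $Aut(X)\to\mathcal{O}(G)$. *)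

(* Defs.v *)
(* Frames (= locales) presented as complete preorders whose
   quotient by mutual inequality is a frame; equality of frame elements is
   [feq] (mutual inequality). *)
From Stdlib Require Import List.
Set Implicit Arguments.
Unset Strict Implicit.

Record frame := Frame {
  car :> Type;
  le : car -> car -> Prop;
  top : car;
  meet : car -> car -> car;
  join : (car -> Prop) -> car;
  le_refl : forall a, le a a;
  le_trans : forall a b c, le a b -> le b c -> le a c;
  le_top : forall a, le a top;
  meet_l : forall a b, le (meet a b) a;
  meet_r : forall a b, le (meet a b) b;
  meet_glb : forall a b c, le c a -> le c b -> le c (meet a b);
  join_ub : forall (S : car -> Prop) a, S a -> le a (join S);
  join_lub : forall (S : car -> Prop) c, (forall a, S a -> le a c) -> le (join S) c;
  distr : forall a (S : car -> Prop),
      le (meet a (join S)) (join (fun y => exists s, S s /\ y = meet a s))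
}.
Arguments le {f} _ _.
Arguments top {f}.
Arguments meet {f} _ _.
Arguments join {f} _.

Definition feq (L : frame) (a b : L) := le a b /\ le b a.
Definition bot (L : frame) : L := join (fun _ => False).
Definition image (L M : frame) (f : L -> M) (S : L -> Prop) : M -> Prop :=
  fun y => exists x, S x /\ y = f x.

(* frame homomorphism = (inverse image of) a locale map *)
Definition is_frame_hom (L M : frame) (f : L -> M) : Prop :=
  (forall a b, le a b -> le (f a) (f b)) /\
  feq (f top) top /\
  (forall a b, feq (f (meet a b)) (meet (f a) (f b))) /\
  (forall S, feq (f (join S)) (join (image f S))).

Section FrameLemmas.
Variable L : frame.
Lemma meet_comm (a b : L) : le (meet a b) (meet b a).
Proof. apply meet_glb; [apply meet_r | apply meet_l]. Qed.
Lemma meet_mono (a a' b b' : L) : le a a' -> le b b' -> le (meet a b) (meet a' b').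
Proof.
  intros Ha Hb; apply meet_glb;
  [apply le_trans with a; [apply meet_l|exact Ha]
  |apply le_trans with b; [apply meet_r|exact Hb]].
Qed.
Lemma meet_assoc1 (a b c : L) : le (meet (meet a b) c) (meet a (meet b c)).
Proof.
  apply meet_glb. apply le_trans with (meet a b); [apply meet_l|apply meet_l].
  apply meet_mono; [apply meet_r|apply le_refl].
Qed.
Lemma meet_assoc2 (a b c : L) : le (meet a (meet b c)) (meet (meet a b) c).
Proof.
  apply meet_glb. apply meet_mono; [apply le_refl|apply meet_l].
  apply le_trans with (meet b c); [apply meet_r|apply meet_r].
Qed.
Definition heyt (b u : L) : L := join (fun y => le (meet y b) u).
Lemma heyt_intro (y b u : L) : le (meet y b) u -> le y (heyt b u).
Proof. intro H; apply join_ub; exact H. Qed.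
Lemma heyt_elim (y b u : L) : le y (heyt b u) -> le (meet y b) u.
Proof.
  intro H. apply le_trans with (meet b (heyt b u)).
  apply le_trans with (meet b y); [apply meet_comm|apply meet_mono; [apply le_refl|exact H]].
  eapply le_trans; [apply distr|]. apply join_lub. intros z [s [Hs ->]].
  eapply le_trans; [apply meet_comm|exact Hs].
Qed.
End FrameLemmas.

Definition Om : frame.
Proof.
  refine (@Frame Prop (fun p q => p -> q) True and
                 (fun S => exists p, S p /\ p) _ _ _ _ _ _ _ _ _).
  - auto.
  - auto.
  - auto.
  - intros a b [H _]; exact H.
  - intros a b [_ H]; exact H.
  - intros a b c H1 H2 H; split; auto.
  - intros S a Sa Ha; exists a; auto.
  - intros S c H [p [Sp Hp]]; exact (H p Sp Hp).
  - intros a S [Ha [p [Sp Hp]]]. exists (a /\ p). split; [exists p; auto|auto].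
Defined.

(* ---------- binary coproduct of locales: tensor product of frames,
   constructed as the frame of C-ideals of L x M ---------- *)
Section Tensor.
Variables L M : frame.
Definition cideal (D : L * M -> Prop) : Prop :=
  (forall a b a' b', D (a, b) -> le a' a -> le b' b -> D (a', b')) /\
  (forall (S : L -> Prop) b, (forall a, S a -> D (a, b)) -> D (join S, b)) /\
  (forall a (S : M -> Prop), (forall b, S b -> D (a, b)) -> D (a, join S)).
Definition gen (R : L * M -> Prop) : L * M -> Prop :=
  fun p => forall E, cideal E -> (forall q, R q -> E q) -> E p.
Lemma gen_cideal R : cideal (gen R).
Proof.
  split; [|split].
  - intros a b a' b' H ha hb E cE HR. destruct cE as [d [jl jr]].
    apply (d a b); [apply H; [exact (conj d (conj jl jr))|exact HR]|exact ha|exact hb].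
  - intros S b H E cE HR. apply (proj1 (proj2 cE)). intros a Sa. apply H; auto.
  - intros a S H E cE HR. apply (proj2 (proj2 cE)). intros b Sb. apply H; auto.
Qed.
Definition tcar := {D : L * M -> Prop | cideal D}.
Definition tle (D E : tcar) := forall p, proj1_sig D p -> proj1_sig E p.
Definition ttop : tcar.
Proof. exists (fun _ => True). split; [|split]; auto. Defined.
Definition tmeet (D E : tcar) : tcar.
Proof.
  exists (fun p => proj1_sig D p /\ proj1_sig E p).
  destruct D as [D [d1 [d2 d3]]], E as [E [e1 [e2 e3]]]; simpl.
  split; [|split].
  - intros a b a' b' [H1 H2] ha hb; split; [eapply d1|eapply e1]; eauto.
  - intros S b H; split; [apply d2|apply e2]; intros a Sa; apply (H a Sa).
  - intros a S H; split; [apply d3|apply e3]; intros b Sb; apply (H b Sb).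
Defined.
Definition tgen (R : L * M -> Prop) : tcar := exist _ (gen R) (gen_cideal R).
Definition tjoin (S : tcar -> Prop) : tcar :=
  tgen (fun p => exists D, S D /\ proj1_sig D p).

Lemma tdistr (A : tcar) (S : tcar -> Prop) :
  tle (tmeet A (tjoin S)) (tjoin (fun y => exists s, S s /\ y = tmeet A s)).
Proof.
  set (J := tjoin (fun y => exists s, S s /\ y = tmeet A s)).
  destruct (proj2_sig J) as [j1 [j2 j3]].
  destruct (proj2_sig A) as [a1 [a2 a3]].
  set (E := fun p : L * M => forall a' b', le a' (fst p) -> le b' (snd p) ->
                 proj1_sig A (a', b') -> proj1_sig J (a', b')).
  assert (cE : cideal E).
  { split; [|split].
    - intros a b a0 b0 H ha hb a' b' h1 h2 HA. apply H; simpl in *;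
        [eapply le_trans; eauto|eapply le_trans; eauto|exact HA].
    - intros T b H a' b' h1 h2 HA. simpl in *.
      apply j1 with (join (fun y => exists s, T s /\ y = meet a' s)) b'.
      + apply j2. intros y [s [Ts ->]]. apply (H s Ts); simpl.
        apply meet_r. exact h2. apply a1 with a' b'; [exact HA|apply meet_l|apply le_refl].
      + eapply le_trans; [|apply distr]. apply meet_glb; [apply le_refl|exact h1].
      + apply le_refl.
    - intros a T H a' b' h1 h2 HA. simpl in *.
      apply j1 with a' (join (fun y => exists s, T s /\ y = meet b' s)).
      + apply j3. intros y [s [Ts ->]]. apply (H s Ts); simpl.
        exact h1. apply meet_r. apply a1 with a' b'; [exact HA|apply le_refl|apply meet_l].
      + apply le_refl.
      + eapply le_trans; [|apply distr]. apply meet_glb; [apply le_refl|exact h2]. }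
  intros [a b] [HA HJ]. simpl in HJ.
  refine (HJ E cE _ a b (le_refl _) (le_refl _) HA).
  intros [x y] [D [SD HD]] a' b' h1 h2 HA'. simpl in *.
  intros F cF HR. apply HR. exists (tmeet A D). split.
  - exists D; auto.
  - simpl. split; [exact HA'|]. destruct (proj2_sig D) as [d1 _].
    eapply d1; eauto.
Qed.

Definition tensor : frame.
Proof.
  refine (@Frame tcar tle ttop tmeet tjoin _ _ _ _ _ _ _ _ tdistr).
  - intros a p H; exact H.
  - intros a b c H1 H2 p H; auto.
  - intros a p _; exact I.
  - intros a b p [H _]; exact H.
  - intros a b p [_ H]; exact H.
  - intros a b c H1 H2 p H; split; auto.
  - intros S a Sa p Hp E cE HR. apply HR. exists a; auto.
  - intros S c H p Hp. apply Hp; [exact (proj2_sig c)|].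
    intros q [D [SD Dq]]. exact (H D SD q Dq).
Defined.

Definition pt (a : L) (b : M) : tensor := tgen (fun p => p = (a, b)).
End Tensor.

Definition tmap (L M L' M' : frame) (f : L -> L') (g : M -> M')
  (D : tensor L M) : tensor L' M' :=
  join (fun y => exists a b, proj1_sig D (a, b) /\ y = pt (f a) (g b)).

Definition assoc (L M N : frame) (D : tensor (tensor L M) N) : tensor L (tensor M N) :=
  join (fun y => exists P c a b, proj1_sig D (P, c) /\ proj1_sig P (a, b) /\
                                 y = pt a (pt b c)).

Definition lunit (L : frame) (D : tensor Om L) : L :=
  join (fun y => exists p : Prop, proj1_sig D (p, y) /\ p).
Definition runit (L : frame) (D : tensor L Om) : L :=
  join (fun y => exists p : Prop, proj1_sig D (y, p) /\ p).
Definition mult (L : frame) (D : tensor L L) : L :=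
  join (fun y => exists a b, proj1_sig D (a, b) /\ y = meet a b).
Definition unitmap (L : frame) (p : Om) : L := join (fun y => p /\ y = top).

(* localic group = Hopf algebra in sup-lattices whose underlying algebra is
   a frame: comultiplication w, counit e, antipode i, all frame maps *)
Record localic_group (L : frame) (w : L -> tensor L L) (e : L -> Om) (i : L -> L)
  : Prop := {
  lg_w_hom : is_frame_hom w;
  lg_e_hom : is_frame_hom e;
  lg_i_hom : is_frame_hom i;
  lg_coassoc : forall a,
      feq (assoc (tmap w (fun x => x) (w a))) (tmap (fun x => x) w (w a));
  lg_counit_l : forall a, feq (lunit (tmap e (fun x => x) (w a))) a;
  lg_counit_r : forall a, feq (runit (tmap (fun x => x) e (w a))) a;
  lg_antipode_l : forall a, feq (mult (tmap i (fun x => x) (w a))) (unitmap L (e a));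
  lg_antipode_r : forall a, feq (mult (tmap (fun x => x) i (w a))) (unitmap L (e a))
}.

(* morphism of localic monoids H -> G, given on frames as f : O(H) -> O(G):
   a frame map compatible with comultiplications and counits *)
Definition hopf_mor (H G : frame) (wH : H -> tensor H H) (eH : H -> Om)
  (wG : G -> tensor G G) (eG : G -> Om) (f : H -> G) : Prop :=
  is_frame_hom f /\
  (forall a, feq (wG (f a)) (tmap f f (wH a))) /\
  (forall a, feq (eG (f a)) (eH a)).

(* ---------- free frame on a set S: up-closed families of finite subsets
   (lists), U standing for \/_{F in U} /\_{s in F} <s> ---------- *)
Section Free.
Variable S : Type.
Definition upset (U : list S -> Prop) :=
  forall F G, U F -> (forall s, In s F -> In s G) -> U G.
Definition fcar := {U | upset U}.
Definition fle (U V : fcar) := forall F, proj1_sig U F -> proj1_sig V F.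
Definition ftop : fcar.
Proof. exists (fun _ => True). intros F G _ _; exact I. Defined.
Definition fmeet (U V : fcar) : fcar.
Proof.
  exists (fun F => proj1_sig U F /\ proj1_sig V F).
  intros F G [H1 H2] H; split; [eapply (proj2_sig U)|eapply (proj2_sig V)]; eauto.
Defined.
Definition fjoin (T : fcar -> Prop) : fcar.
Proof.
  exists (fun F => exists U, T U /\ proj1_sig U F).
  intros F G [U [TU HU]] H. exists U; split; [exact TU|eapply (proj2_sig U); eauto].
Defined.
Definition free : frame.
Proof.
  refine (@Frame fcar fle ftop fmeet fjoin _ _ _ _ _ _ _ _ _).
  - intros a F H; exact H.
  - intros a b c H1 H2 F H; auto.
  - intros a F _; exact I.
  - intros a b F [H _]; exact H.
  - intros a b F [_ H]; exact H.
  - intros a b c H1 H2 F H; split; auto.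
  - intros T a Ta F H. exists a; auto.
  - intros T c H F [U [TU HU]]. exact (H U TU F HU).
  - intros a T F [Ha [U [TU HU]]]. exists (fmeet a U). split.
    + exists U; auto.
    + simpl; auto.
Defined.
Definition gener (s : S) : free.
Proof. exists (fun F => In s F). intros F G H1 H2; auto. Defined.
Definition ext (L : frame) (g : S -> L) (U : free) : L :=
  join (fun y => exists F, proj1_sig U F /\
                  y = fold_right (fun s acc => meet (g s) acc) top F).
End Free.

Definition Rel (X : Type) : frame := free (X * X).
Definition rgen (X : Type) (x y : X) : Rel X := gener (x, y).
Definition wRel (X : Type) : Rel X -> tensor (Rel X) (Rel X) :=
  ext (fun p => join (fun D => exists z, D = pt (rgen (fst p) z) (rgen z (snd p)))).
Definition eRel (X : Type) : Rel X -> Om := @ext (X * X) Om (fun p : X * X => (fst p = snd p : car Om)).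

(* ---------- quotient frame L / R (R : pairs to be identified), built on
   the same carrier with the order  x <= y  iff  every R-saturated element
   above y is above x ---------- *)
Section Quot.
Variables (L : frame) (R : L -> L -> Prop).
Definition sat (u : L) :=
  forall a b c, R a b -> (le (meet a c) u <-> le (meet b c) u).
Definition qle (x y : L) := forall u, sat u -> le y u -> le x u.
Lemma sat_heyt b u : sat u -> sat (heyt b u).
Proof.
  intros su a0 b0 c HR; split; intro H; apply heyt_intro; apply heyt_elim in H.
  - eapply le_trans; [apply meet_assoc1|]. apply (su a0 b0 _ HR).
    eapply le_trans; [apply meet_assoc2|exact H].
  - eapply le_trans; [apply meet_assoc1|]. apply (su a0 b0 _ HR).
    eapply le_trans; [apply meet_assoc2|exact H].
Qed.
Definition quot : frame.
Proof.
  refine (@Frame (car L) qle top meet join _ _ _ _ _ _ _ _ _).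
  - intros a u _ H; exact H.
  - intros a b c H1 H2 u su H; auto.
  - intros a u su H; eapply le_trans; [apply le_top|exact H].
  - intros a b u su H; eapply le_trans; [apply meet_l|exact H].
  - intros a b u su H; eapply le_trans; [apply meet_r|exact H].
  - intros a b c H1 H2 u su H.
    assert (Hc : le (meet c b) u).
    { apply heyt_elim. apply H1; [apply sat_heyt; exact su|].
      apply heyt_intro; exact H. }
    assert (Hc2 : le c (heyt c u)).
    { apply H2; [apply sat_heyt; exact su|].
      apply heyt_intro. eapply le_trans; [apply meet_comm|exact Hc]. }
    apply heyt_elim in Hc2. eapply le_trans; [|exact Hc2].
    apply meet_glb; apply le_refl.
  - intros S a Sa u su H; eapply le_trans; [apply join_ub; exact Sa|exact H].
  - intros S c H u su Hc. apply join_lub. intros a Sa; exact (H a Sa u su Hc).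
  - intros a S u su H. eapply le_trans; [apply distr|exact H].
Defined.
End Quot.

(* ---------- Aut(X): quotient of Rel(X) forcing X x X -> Aut(X) to be an
   l-bijection ---------- *)
Definition autrel (X : Type) (a b : Rel X) : Prop :=
  (exists x, a = join (fun g => exists y, g = rgen x y) /\ b = top) \/
  (exists x y1 y2, y1 <> y2 /\ a = meet (rgen x y1) (rgen x y2) /\ b = bot (Rel X)) \/
  (exists y, a = join (fun g => exists x, g = rgen x y) /\ b = top) \/
  (exists x1 x2 y, x1 <> x2 /\ a = meet (rgen x1 y) (rgen x2 y) /\ b = bot (Rel X)).
Definition Aut (X : Type) : frame := quot (@autrel X).
Definition qAut (X : Type) (U : Rel X) : Aut X := U.
Definition wAut (X : Type) (U : Aut X) : tensor (Aut X) (Aut X) :=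
  tmap (qAut (X:=X)) (qAut (X:=X)) (wRel U).
Definition eAut (X : Type) (U : Aut X) : Om := eRel U.

(* Main.v *)
Require Import Defs.
From Stdlib Require Import List Classical.
Set Implicit Arguments.
Unset Strict Implicit.

Definition mono_sup (L M : frame) (f : L -> M) :=
  (forall a b, le a b -> le (f a) (f b)) /\ (forall S, le (f (join S)) (join (image f S))).

Lemma pt_in (L M : frame) (a:L) (b:M) : proj1_sig (pt a b) (a,b).
Proof. intros E cE HR. apply HR. reflexivity. Qed.

Lemma pt_le (L M : frame) (a:L) (b:M) (T : tensor L M) : proj1_sig T (a,b) -> le (pt a b) T.
Proof. intros H p Hp. apply Hp. exact (proj2_sig T). intros q ->. exact H. Qed.

Lemma tmap_in (L M L' M' : frame) (f : L -> L') (g : M -> M') (D : tensor L M) a b :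
  proj1_sig D (a,b) -> proj1_sig (tmap f g D) (f a, g b).
Proof.
  intro H. assert (Hl : le (pt (f a) (g b)) (tmap f g D)).
  { unfold tmap. apply join_ub. exists a, b; auto. }
  apply Hl. apply pt_in.
Qed.

Lemma tmap_le (L M L' M' : frame) (f : L -> L') (g : M -> M') (D : tensor L M) T :
  (forall a b, proj1_sig D (a,b) -> proj1_sig T (f a, g b)) -> le (tmap f g D) T.
Proof.
  intro H. apply join_lub. intros y [a [b [Hab ->]]]. apply pt_le. auto.
Qed.

Definition Mcid_p {L : frame} (u : L) : L * L -> Prop := fun p => le (meet (fst p) (snd p)) u.
Lemma Mcid_ok {L : frame} (u : L) : cideal (Mcid_p u).
Proof.
  unfold Mcid_p; split; [|split]; simpl.
  - intros a b a' b' H ha hb. eapply le_trans; [apply meet_mono; eauto|exact H].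
  - intros S b H. eapply le_trans; [apply meet_comm|]. eapply le_trans; [apply distr|].
    apply join_lub. intros y [s [Ss ->]]. eapply le_trans; [apply meet_comm|]. apply H; auto.
  - intros a S H. eapply le_trans; [apply distr|].
    apply join_lub. intros y [s [Ss ->]]. apply H; auto.
Qed.
Definition Mcid {L : frame} (u : L) : tensor L L := exist _ (Mcid_p u) (Mcid_ok u).

Lemma mult_le (L:frame) (D : tensor L L) u : le D (Mcid u) -> le (mult D) u.
Proof. intro HD. apply join_lub. intros y [a [b [H ->]]]. exact (HD _ H). Qed.

Lemma mult_ge (L:frame) (D : tensor L L) a b : proj1_sig D (a,b) -> le (meet a b) (mult D).
Proof. intro H. apply join_ub. exists a, b; auto. Qed.

Definition pre_p (L M L' M' : frame) (f : L -> L') (g : M -> M') (T : tensor L' M') : L*M -> Prop :=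
  fun p => proj1_sig T (f (fst p), g (snd p)).
Lemma pre_ok (L M L' M' : frame) (f : L -> L') (g : M -> M') :
  mono_sup f -> mono_sup g -> forall T, cideal (pre_p f g T).
Proof.
  intros [f1 f2] [g1 g2] T. destruct (proj2_sig T) as [t1 [t2 t3]]. unfold pre_p; simpl.
  split; [|split].
  - intros a b a' b' H ha hb. eapply t1; eauto.
  - intros S b H. eapply t1; [|apply f2|apply le_refl]. apply t2.
    intros a' [a [Sa ->]]. exact (H a Sa).
  - intros a S H. eapply t1; [|apply le_refl|apply g2]. apply t3.
    intros b' [b [Sb ->]]. exact (H b Sb).
Qed.
Definition pre (L M L' M' : frame) (f : L -> L') (g : M -> M') (Hf : mono_sup f) (Hg : mono_sup g)
  (T : tensor L' M') : tensor L M := exist _ (pre_p f g T) (pre_ok Hf Hg T).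

Lemma hom_ms (L M : frame) (f : L -> M) : is_frame_hom f -> mono_sup f.
Proof. intros [h1 [_ [_ h4]]]. split; auto. intro S; apply (h4 S). Qed.

Lemma id_ms (L : frame) : mono_sup (fun x : L => x).
Proof. split; auto. intro S. apply join_lub. intros a Sa. apply join_ub. exists a; auto. Qed.

Lemma fold_le_In (L:frame) (S:Type) (g : S -> L) F s : In s F ->
  le (fold_right (fun s acc => meet (g s) acc) top F) (g s).
Proof.
  induction F as [|t F IH]; simpl; [tauto|]. intros [->|H].
  - apply meet_l.
  - eapply le_trans; [apply meet_r|auto].
Qed.

Lemma wRel_mem (X:Type) x y z : proj1_sig (wRel (rgen (X:=X) x y)) (rgen x z, rgen z y).
Proof.
  assert (Hl : le (pt (rgen x z) (rgen z y)) (wRel (rgen (X:=X) x y))).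
  { unfold wRel, ext.
    eapply le_trans; [| apply join_ub; exists ((x,y)::nil); split; [left; reflexivity | reflexivity]].
    cbn [fold_right fst snd]. apply meet_glb; [|apply le_top].
    apply join_ub. exists z. reflexivity. }
  apply Hl. apply pt_in.
Qed.

Lemma wRel_le (X:Type) x y P :
  (forall z, proj1_sig P (rgen x z, rgen z y)) -> le (wRel (rgen (X:=X) x y)) P.
Proof.
  intro H. unfold wRel, ext. apply join_lub. intros t [F [HF ->]].
  eapply le_trans; [apply fold_le_In; exact HF|]. cbn beta.
  apply join_lub. intros D [z ->]. apply pt_le. exact (H z).
Qed.
Lemma bot_le (L : frame) (a : L) : le (bot L) a.
Proof. apply join_lub. intros _ []. Qed.

Lemma eRel_refl (X:Type) (x:X) : eRel (rgen x x).
Proof.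
  exists ((x = x) /\ True). split; [|auto].
  exists ((x,x)::nil). split; [left; reflexivity|reflexivity].
Qed.

Lemma eRel_eq (X:Type) (x y:X) : eRel (rgen x y) -> x = y.
Proof.
  intros [p [[F [HF ->]] Hp]]. change (In (x,y) F) in HF. revert HF Hp.
  induction F as [|s F IH]; intros HF Hp; [destruct HF|].
  destruct Hp as [H1 H2]. destruct HF as [->|HF]; [exact H1|exact (IH HF H2)].
Qed.


Lemma AL_top (O : frame) (w : O -> tensor O O) (e : O -> Om) (i : O -> O)
  (X : Type) (mu : Rel X -> O) :
  localic_group w e i -> hopf_mor (@wRel X) (@eRel X) w e mu ->
  forall x, le top (join (fun t => exists z, t = meet (i (mu (rgen x z))) (mu (rgen z x)))).
Proof.
  intros HG Hm x. set (u := join _).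
  assert (Hmu : mono_sup mu) by (apply hom_ms; apply Hm).
  assert (Hi : mono_sup i) by (apply hom_ms; apply HG).
  assert (H1 : le (wRel (rgen x x)) (pre Hmu Hmu (pre Hi (id_ms O) (Mcid u)))).
  { apply wRel_le; intro z. cbn. apply join_ub. exists z. reflexivity. }
  assert (H2 : le (tmap mu mu (wRel (rgen x x))) (pre Hi (id_ms O) (Mcid u))).
  { apply tmap_le; intros a b Hab. exact (H1 _ Hab). }
  assert (H3 : le (tmap i (fun x => x) (w (mu (rgen x x)))) (Mcid u)).
  { apply tmap_le; intros a b Hab. apply (H2 (a,b)).
    apply (proj1 (proj1 (proj2 Hm) _)). exact Hab. }
  eapply le_trans; [|apply mult_le; exact H3].
  eapply le_trans; [|apply (proj2 (lg_antipode_l HG _))].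
  apply join_ub. split; [|reflexivity].
  apply (proj2 (proj2 (proj2 Hm) _)). apply eRel_refl.
Qed.

Lemma AR_top (O : frame) (w : O -> tensor O O) (e : O -> Om) (i : O -> O)
  (X : Type) (mu : Rel X -> O) :
  localic_group w e i -> hopf_mor (@wRel X) (@eRel X) w e mu ->
  forall x, le top (join (fun t => exists z, t = meet (mu (rgen x z)) (i (mu (rgen z x))))).
Proof.
  intros HG Hm x. set (u := join _).
  assert (Hmu : mono_sup mu) by (apply hom_ms; apply Hm).
  assert (Hi : mono_sup i) by (apply hom_ms; apply HG).
  assert (H1 : le (wRel (rgen x x)) (pre Hmu Hmu (pre (id_ms O) Hi (Mcid u)))).
  { apply wRel_le; intro z. cbn. apply join_ub. exists z. reflexivity. }
  assert (H2 : le (tmap mu mu (wRel (rgen x x))) (pre (id_ms O) Hi (Mcid u))).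
  { apply tmap_le; intros a b Hab. exact (H1 _ Hab). }
  assert (H3 : le (tmap (fun x => x) i (w (mu (rgen x x)))) (Mcid u)).
  { apply tmap_le; intros a b Hab. apply (H2 (a,b)).
    apply (proj1 (proj1 (proj2 Hm) _)). exact Hab. }
  eapply le_trans; [|apply mult_le; exact H3].
  eapply le_trans; [|apply (proj2 (lg_antipode_r HG _))].
  apply join_ub. split; [|reflexivity].
  apply (proj2 (proj2 (proj2 Hm) _)). apply eRel_refl.
Qed.

Lemma AL_bot (O : frame) (w : O -> tensor O O) (e : O -> Om) (i : O -> O)
  (X : Type) (mu : Rel X -> O) :
  localic_group w e i -> hopf_mor (@wRel X) (@eRel X) w e mu ->
  forall x y z, x <> y -> le (meet (i (mu (rgen x z))) (mu (rgen z y))) (bot O).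
Proof.
  intros HG Hm x y z Hxy.
  eapply le_trans; [apply mult_ge; apply tmap_in with (f := i) (g := fun x => x)|].
  { apply (proj2 (proj1 (proj2 Hm) (rgen x y))). apply tmap_in. apply wRel_mem. }
  eapply le_trans; [apply (proj1 (lg_antipode_l HG _))|].
  apply join_lub. intros t [Hp _]. exfalso. apply Hxy. apply eRel_eq.
  apply (proj1 (proj2 (proj2 Hm) _)). exact Hp.
Qed.

Lemma AR_bot (O : frame) (w : O -> tensor O O) (e : O -> Om) (i : O -> O)
  (X : Type) (mu : Rel X -> O) :
  localic_group w e i -> hopf_mor (@wRel X) (@eRel X) w e mu ->
  forall x y z, x <> y -> le (meet (mu (rgen x z)) (i (mu (rgen z y)))) (bot O).
Proof.
  intros HG Hm x y z Hxy.
  eapply le_trans; [apply mult_ge; apply tmap_in with (f := fun x => x) (g := i)|].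
  { apply (proj2 (proj1 (proj2 Hm) (rgen x y))). apply tmap_in. apply wRel_mem. }
  eapply le_trans; [apply (proj1 (lg_antipode_r HG _))|].
  apply join_lub. intros t [Hp _]. exfalso. apply Hxy. apply eRel_eq.
  apply (proj1 (proj2 (proj2 Hm) _)). exact Hp.
Qed.

Lemma G_func (O : frame) (w : O -> tensor O O) (e : O -> Om) (i : O -> O)
  (X : Type) (mu : Rel X -> O) :
  localic_group w e i -> hopf_mor (@wRel X) (@eRel X) w e mu ->
  forall x y1 y2, y1 <> y2 -> le (meet (mu (rgen x y1)) (mu (rgen x y2))) (bot O).
Proof.
  intros HG Hm x y1 y2 Hy.
  assert (S1 : le (mu (rgen x y1)) (i (mu (rgen y1 x)))).
  { eapply le_trans; [apply meet_glb; [apply le_refl | eapply le_trans; [apply le_top| apply (AL_top HG Hm y1)]]|].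
    eapply le_trans; [apply distr|]. apply join_lub. intros t [s [[z ->] ->]].
    destruct (classic (z = x)) as [->|Hzx].
    - eapply le_trans; [apply meet_r|apply meet_l].
    - eapply le_trans; [|apply bot_le]. eapply le_trans; [|apply (AR_bot HG Hm (x:=x) (y:=z) y1); auto].
      apply meet_mono; [apply le_refl|apply meet_l]. }
  eapply le_trans; [apply meet_mono; [exact S1|apply le_refl]|].
  apply (AL_bot HG Hm); exact Hy.
Qed.

Lemma G_inj (O : frame) (w : O -> tensor O O) (e : O -> Om) (i : O -> O)
  (X : Type) (mu : Rel X -> O) :
  localic_group w e i -> hopf_mor (@wRel X) (@eRel X) w e mu ->
  forall x1 x2 y, x1 <> x2 -> le (meet (mu (rgen x1 y)) (mu (rgen x2 y))) (bot O).
Proof.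
  intros HG Hm x1 x2 y Hx.
  assert (S1 : le (mu (rgen x1 y)) (i (mu (rgen y x1)))).
  { eapply le_trans; [apply meet_glb; [apply le_refl | eapply le_trans; [apply le_top| apply (AR_top HG Hm x1)]]|].
    eapply le_trans; [apply distr|]. apply join_lub. intros t [s [[z ->] ->]].
    destruct (classic (z = y)) as [->|Hzy].
    - eapply le_trans; [apply meet_r|apply meet_r].
    - eapply le_trans; [|apply bot_le]. eapply le_trans; [|apply (G_func HG Hm x1 (y1:=y) (y2:=z)); auto].
      apply meet_mono; [apply le_refl|apply meet_l]. }
  eapply le_trans; [apply meet_comm|].
  eapply le_trans; [apply meet_mono; [apply le_refl|exact S1]|].
  apply (AR_bot HG Hm); auto.
Qed.

Lemma autrel_feq (O : frame) (w : O -> tensor O O) (e : O -> Om) (i : O -> O)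
  (X : Type) (mu : Rel X -> O) :
  localic_group w e i -> hopf_mor (@wRel X) (@eRel X) w e mu ->
  forall a b, autrel a b -> feq (mu a) (mu b).
Proof.
  intros HG Hm a b HR.
  destruct (proj1 Hm) as [h1 [h2 [h3 h4]]].
  assert (Hbot : forall c, le (mu (bot (Rel X))) c).
  { intro c. eapply le_trans; [apply (proj1 (h4 _))|]. apply join_lub. intros t [r [[] _]]. }
  destruct HR as [[x [-> ->]]|[[x [y1 [y2 [Hy [-> ->]]]]]|[[y [-> ->]]|[x1 [x2 [y [Hx [-> ->]]]]]]]].
  - split; [apply h1; apply le_top|].
    eapply le_trans; [apply le_top|]. eapply le_trans; [apply (AR_top HG Hm x)|].
    eapply le_trans; [|apply (proj2 (h4 _))]. apply join_lub. intros t [z ->].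
    eapply le_trans; [apply meet_l|]. apply join_ub. exists (rgen x z). split; [exists z|]; reflexivity.
  - split; [|apply Hbot]. eapply le_trans; [apply (proj1 (h3 _ _))|].
    eapply le_trans; [apply (G_func HG Hm x Hy)|apply bot_le].
  - split; [apply h1; apply le_top|].
    eapply le_trans; [apply le_top|]. eapply le_trans; [apply (AL_top HG Hm y)|].
    eapply le_trans; [|apply (proj2 (h4 _))]. apply join_lub. intros t [z ->].
    eapply le_trans; [apply meet_r|]. apply join_ub. exists (rgen z y). split; [exists z|]; reflexivity.
  - split; [|apply Hbot]. eapply le_trans; [apply (proj1 (h3 _ _))|].
    eapply le_trans; [apply (G_inj HG Hm y Hx)|apply bot_le].
Qed.

Lemma mu_qle (O : frame) (w : O -> tensor O O) (e : O -> Om) (i : O -> O)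
  (X : Type) (mu : Rel X -> O) :
  localic_group w e i -> hopf_mor (@wRel X) (@eRel X) w e mu ->
  forall a b : Aut X, le a b -> le (mu a) (mu b).
Proof.
  intros HG Hm a b Hab.
  destruct (proj1 Hm) as [h1 [h2 [h3 h4]]].
  set (u0 := join (fun u : Rel X => le (mu u) (mu b))).
  assert (Hu0 : forall z, le z u0 <-> le (mu z) (mu b)).
  { intro z; split; intro H.
    - eapply le_trans; [apply h1; exact H|]. eapply le_trans; [apply (proj1 (h4 _))|].
      apply join_lub. intros t [r [Hr ->]]. exact Hr.
    - apply join_ub. exact H. }
  assert (Hs : sat (@autrel X) u0).
  { intros a1 b1 c HR. rewrite !Hu0. pose proof (autrel_feq HG Hm HR) as [F1 F2].
    split; intro H.
    - eapply le_trans; [apply (proj1 (h3 _ _))|]. eapply le_trans; [|exact H].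
      eapply le_trans; [|apply (proj2 (h3 _ _))]. apply meet_mono; [exact F2|apply le_refl].
    - eapply le_trans; [apply (proj1 (h3 _ _))|]. eapply le_trans; [|exact H].
      eapply le_trans; [|apply (proj2 (h3 _ _))]. apply meet_mono; [exact F1|apply le_refl]. }
  apply Hu0. apply (Hab u0 Hs). apply Hu0. apply le_refl.
Qed.

Theorem mainTheorem10 (O : frame) (w : O -> tensor O O) (e : O -> Om) (i : O -> O)
  (X : Type) (mu : Rel X -> O) :
  localic_group w e i ->
  hopf_mor (@wRel X) (@eRel X) w e mu ->
  exists psi : Aut X -> O,
    (hopf_mor (@wAut X) (@eAut X) w e psi /\
     forall U : Rel X, feq (psi (qAut U)) (mu U)) /\
    (forall psi' : Aut X -> O,
       hopf_mor (@wAut X) (@eAut X) w e psi' ->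
       (forall U : Rel X, feq (psi' (qAut U)) (mu U)) ->
       forall V : Aut X, feq (psi' V) (psi V)).
Proof.
  intros HG Hm.
  pose proof (mu_qle HG Hm) as Hq.
  destruct (proj1 Hm) as [h1 [h2 [h3 h4]]].
  assert (Hmu : mono_sup mu) by (apply hom_ms; apply Hm).
  assert (HmuA : mono_sup (fun V : Aut X => mu V)).
  { split; [exact Hq|intro S; exact (proj1 (h4 S))]. }
  exists (fun V : Aut X => mu V). split; [split|].
  - split; [|split].
    + split; [exact Hq|split; [exact h2|split; [exact h3|exact h4]]].
    + intro a. destruct (proj1 (proj2 Hm) a) as [F1 F2]. split.
      * eapply le_trans; [exact F1|]. apply tmap_le. intros p q Hpq.
        apply (tmap_in (f := fun V : Aut X => mu V) (g := fun V : Aut X => mu V) (D := wAut a) (a := p) (b := q)).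
        unfold wAut. apply (tmap_in (f := @qAut X) (g := @qAut X)). exact Hpq.
      * eapply le_trans; [|exact F2].
        assert (H1 : le (wAut a) (pre HmuA HmuA (tmap mu mu (wRel a)))).
        { unfold wAut. apply tmap_le. intros p q Hpq. apply tmap_in. exact Hpq. }
        apply tmap_le. intros p q Hpq. exact (H1 _ Hpq).
    + intro a. exact (proj2 (proj2 Hm) a).
  - intro U. split; apply le_refl.
  - intros psi' _ Hag V. exact (Hag V).
Qed.
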